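(* Let $s,m$ be positive integers, $n=sm$, and let $k\geq 2$ be an integer. Let $F\in\mathbb{F}_{2^s}[x]$ be a polynomial which, viewed as a function $\mathbb{F}_{2^n}\to\mathbb{F}_{2^n}$, is differentially $(1,2k)$-uniform, i.e. $\delta_{F,1}=2k$. Suppose that $m$ is not divisible by any integer $t$ with $2\leq t\leq k$. Then for all $a,b\in\mathbb{F}_{2^s}$ with $a\neq 0$, the equation $F(x+a)+F(x)=b$ has no solution $x\in\mathbb{F}_{2^n}\setminus\mathbb{F}_{2^s}$.
   Context: For a function $F:\mathbb{F}_{p^n}\to\mathbb{F}_{p^n}$ and $c\in\mathbb{F}_{p^n}$, let ${}_c\Delta_F(a,b)=\#\{x\in\mathbb{F}_{p^n}: F(x+a)-cF(x)=b\}$, and the $c$-differential uniformity of $F$ is $\delta_{F,c}=\max\{{}_c\Delta_F(a,b): a,b\in\mathbb{F}_{p^n},\ a\neq 0 \text{ if } c=1\}$. $F$ is called differentially $(c,\delta)$-uniform if $\delta_{F,c}=\delta$. *)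

(* Defs.v *)
From HB Require Import structures.
From mathcomp Require Import all_boot all_order all_algebra all_field.
Set Implicit Arguments. Unset Strict Implicit. Unset Printing Implicit Defensive.
Import GRing.Theory.
Local Open Scope ring_scope.

Definition cDelta (L : finFieldType) (F : L -> L) (c a b : L) : nat :=
  #|[set x : L | F (x + a) - c * F x == b]|.

Definition cdiff_unif (L : finFieldType) (F : L -> L) (c : L) : nat :=
  \max_(ab : L * L | (c != 1) || (ab.1 != 0)) cDelta F c ab.1 ab.2.

(* The subfield F_{2^s} of a finite field L of order 2^n (s | n):
   the set of fixed points of x |-> x^(2^s). *)
Definition subF (L : finFieldType) (s : nat) : {set L} :=
  [set x : L | x ^+ (2 ^ s) == x].

(* Main.v *)
Require Import Defs.
From HB Require Import structures.
From mathcomp Require Import all_boot all_order all_algebra all_field.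
From mathcomp Require Import zify.
Import GRing.Theory.
Local Open Scope ring_scope.

Section Aux.
Variable L : finFieldType.
Hypothesis ch2 : 2%N \in [pchar L].

Lemma frobD e (u v : L) : (u + v) ^+ (2 ^ e) = u ^+ (2 ^ e) + v ^+ (2 ^ e).
Proof.
elim: e => [|e IH]; first by rewrite !expr1.
by rewrite expnSr !exprM IH exprDn_pchar // pnatE // (pcharf_eq ch2).
Qed.

Lemma frob_sum e (I : finType) (G : I -> L) :
  (\sum_i G i) ^+ (2 ^ e) = \sum_i (G i) ^+ (2 ^ e).
Proof.
apply: (big_morph (fun y => y ^+ (2 ^ e))).
  by move=> u v; rewrite frobD.
by rewrite expr0n expn_eq0.
Qed.

Lemma frob_fix s i (u : L) : u \in subF L s -> u ^+ (2 ^ (s * i)) = u.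
Proof.
rewrite inE => /eqP hu; elim: i => [|i IH]; first by rewrite muln0 expr1.
by rewrite mulnS expnD exprM hu IH.
Qed.

Lemma frob_horner s i (P : {poly L}) (y : L) : (forall j, P`_j \in subF L s) ->
  P.[y] ^+ (2 ^ (s * i)) = P.[y ^+ (2 ^ (s * i))].
Proof.
move=> hP; rewrite !horner_coef frob_sum; apply: eq_bigr => j _.
by rewrite exprMn (@frob_fix _ i _ (hP j)) -!exprM mulnC.
Qed.
End Aux.

Theorem proposition2p2 (s m k : nat) (L : finFieldType) (P : {poly L}) :
  (0 < s)%N -> (0 < m)%N -> (2 <= k)%N ->
  #|L| = (2 ^ (s * m))%N ->
  (forall i, P`_i \in subF L s) ->
  cdiff_unif (fun x => P.[x]) 1 = (2 * k)%N ->
  (forall t : nat, (2 <= t <= k)%N -> ~~ (t %| m)%N) ->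
  forall a b : L, a \in subF L s -> b \in subF L s -> a != 0 ->
  forall x : L, x \notin subF L s -> P.[x + a] + P.[x] != b.
Proof.
move=> s0 m0 k2 cardL hP hunif hdiv a b aK bK a0 x xK.
have ch2 : 2%N \in [pchar L] by apply: (card_finPcharP cardL).
apply/negP => /eqP hb.
pose f i := x ^+ (2 ^ (s * i)).
have fS : forall i j, f (i + j)%N = f i ^+ (2 ^ (s * j)).
  by move=> i j; rewrite /f mulnDr expnD exprM.
have fm : f m = x by rewrite /f -cardL expf_card.
have exd : exists j, (0 < j)%N && (f j == x) by exists m; rewrite m0 fm eqxx.
have [d [d0 fd dmin]] : exists d, [/\ (0 < d)%N, f d = x &
    forall j, (0 < j)%N -> f j = x -> (d <= j)%N].
  case: (ex_minnP exd) => d' /andP[h1 /eqP h2] h3; exists d'; split => //.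
  by move=> j hj hfj; apply: h3; rewrite hj hfj eqxx.
have fpd : forall i, f (i + d)%N = f i by move=> i; rewrite addnC fS fd.
have fper : forall i, f i = f (i %% d)%N.
  move=> i; rewrite {1}(divn_eq i d) addnC; elim: (i %/ d)%N => [|q IH].
    by rewrite mul0n addn0.
  by rewrite mulSn (addnC d) addnA fpd IH.
have fr : forall r, (r < d)%N -> f r = x -> r = 0%N.
  move=> r rd fx; case: (posnP r) => // r0; have := dmin r r0 fx; lia.
have ddiv : (d %| m)%N.
  by apply/eqP; apply: fr; [rewrite ltn_mod | rewrite -fper].
have d1 : d != 1%N.
  apply/eqP => d1; move: xK; rewrite inE; move/negP; apply.
  by apply/eqP; have := fd; rewrite d1 /f muln1.
have dk : (k < d)%N.
  rewrite ltnNge; apply/negP => dk.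
  have d2 : (1 < d)%N by rewrite ltn_neqAle eq_sym d1 d0.
  by have := hdiv d; rewrite d2 dk ddiv; move/(_ isT).
have soli : forall i, P.[f i + a] + P.[f i] = b.
  move=> i; rewrite -(@frob_fix _ _ i _ bK) -hb (@frobD L ch2).
  rewrite !(@frob_horner L ch2 s i _ _ hP) (@frobD L ch2) (@frob_fix _ _ i _ aK) //.
have finj : forall i j, (i < d)%N -> (j < d)%N -> f i = f j -> i = j.
  have H : forall i j, (i < j)%N -> (j < d)%N -> f i = f j -> False.
    move=> i j ij jd fij.
    have : f (i + (d - j))%N = x by rewrite fS fij -fS subnKC ?fd // ltnW.
    move/(fr _); lia.
  move=> i j id jd fij; case: (ltngtP i j) => // ij.
    by case: (H _ _ ij jd fij).
  by case: (H _ _ ij id (esym fij)).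
case: (boolP [exists j : 'I_d, f j == x + a]).
  case/existsP => j /eqP fj.
  have j0 : (0 < j)%N.
    case: (posnP j) => // j0; move: fj; rewrite j0 /f muln0 expr1 => /eqP.
    by rewrite -subr_eq0 opprD addNKr oppr_eq0 (negPf a0).
  have f2 : f (j + j)%N = x.
    rewrite fS fj (@frobD L ch2) (@frob_fix _ _ j _ aK).
    by change (f j + a = x); rewrite fj addrK_pchar2.
  have : ((j + j) %% d = 0)%N by apply: fr; [rewrite ltn_mod | rewrite -fper].
  move/eqP; rewrite -/(dvdn d (j + j)) => /dvdnP [q hq].
  have jd := ltn_ord j.
  have q1 : q = 1%N by nia.
  have : (2 %| m)%N.
    apply: dvdn_trans ddiv; apply/dvdnP; exists (nat_of_ord j); lia.
  by apply/negP; apply: hdiv; rewrite leqnn k2.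
move=> hB.
have cross : forall i j, (i < d)%N -> (j < d)%N -> f i + a <> f j.
  move=> i j id jd fij; move/negP: hB; apply; apply/existsP.
  have hj : ((j + (d - i)) %% d < d)%N by rewrite ltn_mod.
  exists (Ordinal hj) => /=; rewrite -fper fS -fij (@frobD L ch2) -fS.
  by rewrite subnKC ?fd ?(@frob_fix _ _ _ _ aK) // ltnW.
pose g (i : 'I_(d + d)) := if (i < d)%N then f i else f (i - d)%N + a.
have ginj : injective g.
  move=> i j; rewrite /g; have := ltn_ord i; have := ltn_ord j.
  case: ifP => id; case: ifP => jd iL jL.
  - by move/(finj _ _ id jd)/val_inj.
  - move/esym/(cross _ _ _ id); lia.
  - move/(cross _ _ _ jd); lia.
  - move/addIr => e; apply: val_inj; move/negbT: id; move/negbT: jd.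
    rewrite -!leqNgt => jd id.
    have h : (i - d = j - d)%N by apply: finj => //; lia.
    change (nat_of_ord i = nat_of_ord j).
    lia.
have : (d + d <= 2 * k)%N.
  rewrite -hunif /cdiff_unif.
  apply: leq_trans (@leq_bigmax_cond _ _ (fun ab : L * L => cDelta (fun x => P.[x]) 1 ab.1 ab.2) (a, b) _); last by rewrite a0 orbT.
  rewrite /cDelta /= -[X in (X <= _)%N](card_ord (d + d)) -(card_imset _ ginj).
  apply: subset_leq_card; apply/subsetP => y /imsetP [i _ ->].
  rewrite inE mul1r (GRing.subr_pchar2 ch2) /g; case: ifP => _; first by rewrite soli.
  by rewrite addrK_pchar2 // addrC soli.
lia.
Qed.
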